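(* Let $k\ge 2$ be an integer and let $J$ be a $k$-januarial. Then every vertex of the common graph $\Upsilon$ of $J$ has even valency.
   Context: Let $\Delta(2,k,\ell)=\langle x,y:x^2=y^k=(xy)^\ell=1\rangle$, acting on a finite set $S$. The coset graph has: - vertex set $S$; - an undirected $x$-edge joining each pair of points transposed by $x$ (points fixed by $x$ carry no $x$-edge); - a directed $y$-edge $u\to uy$. It is $2$-cell embedded in a closed orientable surface via the rotation system (incoming $y$-edge, outgoing $y$-edge, $x$-edge) at each vertex. The faces are $y$-faces (boundary label $y^n$, $n\mid k$) and $xy$-faces (boundary label $(xy)^m$). This is the coset diagram. A $k$-januarial is the coset diagram of an action of $\Delta(2,k,\ell)$, for some $\ell$, in which $\langle xy\rangle$ has exactly two orbits, each of size $|S|/2$. Let $S_1,S_2$ be the closures of its two $xy$-faces. Collapsing each $y$-face to a point gives the companion graph/diagram, in which the $x$-edges become edges between the collapsed $y$-faces. Let $S_i'$ be the image of $S_i$. The common graph is $\Upsilon=S_1'\cap S_2'$. *)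

(* Defs.v *)
From mathcomp Require Import all_boot all_fingroup.
Set Implicit Arguments. Unset Strict Implicit. Unset Printing Implicit Defensive.
Local Open Scope group_scope.

Section CosetDiagram.
Variable T : finType.

(* Right action: u |-> u x = x u, and
   (x * y) u = y (x u) (mathcomp's permM), i.e. u(xy). *)
Definition Delta_action (k l : nat) (x y : {perm T}) : Prop :=
  [/\ x ^+ 2 = 1, y ^+ k = 1 & (x * y) ^+ l = 1].

(* The xy-faces of the coset diagram correspond to the orbits of <xy>. *)
Definition xy_faces (x y : {perm T}) : {set {set T}} := porbits (x * y).

Definition januarial (k : nat) (x y : {perm T}) : Prop :=
  [/\ exists l, (0 < l)%N /\ Delta_action k l x y,
      #|xy_faces x y| = 2
    & forall O, O \in xy_faces x y -> (#|O| * 2)%N = #|T| ].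

(* The x-edge at u (only meaningful when x u != u): the pair {u, ux}. *)
Definition x_edge (x : {perm T}) (u : T) : {set T} := [set u; x u].

(* Closure S_O of the xy-face O: its boundary walk is u, ux, uxy, uxyx, ...
   for u in O, so its vertices are O together with O x, and its x-edges are
   the x-edges {u, ux} with u in O (and ux != u). *)
Definition face_vertices (x : {perm T}) (O : {set T}) : {set T} :=
  O :|: [set x u | u in O].
Definition face_xedges (x : {perm T}) (O : {set T}) : {set {set T}} :=
  [set x_edge x u | u in O & x u != u].

(* Companion diagram: each y-face (y-orbit) is collapsed to a point, so the
   vertex u of the coset diagram goes to its y-orbit, and the x-edge {u, ux}
   becomes an edge between porbit y u and porbit y (x u).  The image S_O' of
   S_O has vertices the y-orbits of the vertices of S_O and edges the images
   of the x-edges of S_O (y-edges collapse into vertices). *)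
Definition companion_face_vertices (x y : {perm T}) (O : {set T})
  : {set {set T}} := [set porbit y u | u in face_vertices x O].

Definition common_vertices (x y : {perm T}) (O1 O2 : {set T})
  : {set {set T}} :=
  companion_face_vertices x y O1 :&: companion_face_vertices x y O2.
Definition common_edges (x : {perm T}) (O1 O2 : {set T}) : {set {set T}} :=
  face_xedges x O1 :&: face_xedges x O2.

(* Valency of the vertex Y (a y-orbit) in Upsilon: the number of edge-ends
   (darts) at Y, i.e. the number of endpoints u (with u in Y) of edges
   {u, ux} of Upsilon; a loop contributes 2. *)
Definition common_valency (x y : {perm T}) (O1 O2 : {set T}) (Y : {set T})
  : nat :=
  #|[set u | [&& porbit y u == Y, x u != u & x_edge x u \in common_edges x O1 O2]]|.

End CosetDiagram.

(* Main.v *)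
Require Import Defs.
From mathcomp Require Import all_boot all_fingroup.
Set Implicit Arguments. Unset Strict Implicit. Unset Printing Implicit Defensive.

Lemma parity_lemma (T : finType) (s : {perm T}) (f : pred T) (Y : {set T}) :
  (forall u, (s u \in Y) = (u \in Y)) ->
  ~~ odd #|[set u | (u \in Y) && (f u != f (s u))]|.
Proof.
move=> HY.
rewrite -sum1dep_card big_mkcondr /=.
have -> : \sum_(u in Y) (if f u != f (s u) then 1 else 0)
        = \sum_(u in Y) ((f u != f (s u)) : nat).
  by apply: eq_bigr => u _; case: (f u != f (s u)).
have E : forall a b : bool, ((a != b) : nat) + 2 * (a && b) = a + b.
  by case; case.
have Hs : \sum_(u in Y) (f (s u) : nat) = \sum_(u in Y) (f u : nat).
  rewrite [RHS](reindex_inj (@perm_inj _ s)) /=.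
  by apply: eq_bigl => u; rewrite HY.
set S := \sum_(u in Y) _.
have : S + 2 * \sum_(u in Y) ((f u && f (s u)) : nat)
       = 2 * \sum_(u in Y) (f u : nat).
  rewrite big_distrr /= -big_split /= mul2n -addnn -{2}Hs -big_split /=.
  by apply: eq_bigr => u _; rewrite E.
move/(congr1 odd); rewrite oddD !oddM /= addbF => ->.
by [].
Qed.

Theorem proposition2 (T : finType) (k : nat) (x y : {perm T}) :
  (2 <= k)%N -> januarial k x y ->
  forall O1 O2 : {set T},
    O1 \in xy_faces x y -> O2 \in xy_faces x y -> O1 != O2 ->
  forall Y : {set T}, Y \in common_vertices x y O1 O2 ->
    ~~ odd (common_valency x y O1 O2 Y).
Proof.
move=> _ [[l [_ [Hx _ _]]] Hcard _] O1 O2 HO1 HO2 Hne Y HY.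
set s := (x * y)%g.
have xx : forall u, x (x u) = u.
  move=> u; have : (x ^+ 2)%g u = u by rewrite Hx perm1.
  by rewrite expgS expg1 permM.
have sx : forall u, s (x u) = y u by move=> u; rewrite permM xx.
have HO1' := HO1; case/imsetP: HO1' => a _ Ea.
have HO2' := HO2; case/imsetP: HO2' => b _ Eb.
rewrite -/s in Ea Eb.
have Hpo : xy_faces x y = [set O1; O2].
  apply/esym/eqP; rewrite eqEcard Hcard cards2 Hne andbT.
  by apply/subsetP => Z; rewrite !inE => /orP [] /eqP ->.
have mem1 : forall t, (t \in O1) = (porbit s t == O1).
  by move=> t; rewrite Ea eq_porbit_mem.
have mem2 : forall t, (t \in O2) = ~~ (t \in O1).
  move=> t; have : porbit s t \in xy_faces x y by apply: imset_f.
  have m2 : (t \in O2) = (porbit s t == O2) by rewrite Eb eq_porbit_mem.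
  rewrite Hpo !inE m2 mem1.
  by case/orP => /eqP ->; rewrite eqxx ?(negbTE Hne) // eq_sym (negbTE Hne).
have memxy : forall u, (x u \in O1) = (y u \in O1).
  move=> u; rewrite !mem1 -sx.
  by have := porbit_perm s 1 (x u); rewrite expg1 => ->.
have edge : forall O u, x u != u ->
    (x_edge x u \in face_xedges x O) = (u \in O) || (x u \in O).
  move=> O u Hu; apply/imsetP/orP.
    case=> v; rewrite inE => /andP [vO _] E.
    have : v \in x_edge x u by rewrite E /x_edge !inE eqxx.
    by rewrite !inE => /orP [] /eqP <-; [left | right].
  case=> H.
    by exists u => //; rewrite inE H Hu.
  exists (x u); first by rewrite inE H xx eq_sym Hu.
  by rewrite /x_edge xx setUC.
case/setIP: HY => /imsetP [w _ Ew] _.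
have HYy : forall u, (y u \in Y) = (u \in Y).
  move=> u; rewrite Ew -!eq_porbit_mem.
  by have := porbit_perm y 1 u; rewrite expg1 => ->.
rewrite /common_valency.
have -> : [set u | [&& porbit y u == Y, x u != u
                   & x_edge x u \in common_edges x O1 O2]]
        = [set u | (u \in Y) && ((u \in O1) != (y u \in O1))].
  apply/setP => u; rewrite !inE Ew eq_porbit_mem -Ew.
  case: (u \in Y) => //=.
  case: (eqVneq (x u) u) => Hu /=.
    by rewrite -memxy Hu eqxx.
  rewrite !edge // !mem2 memxy.
  by case: (u \in O1); case: (y u \in O1).
by have := @parity_lemma _ y (fun t => t \in O1) Y HYy.
Qed.
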